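(* Let $p>q\ge1$ be coprime integers such that $\frac pq=[a_1,\dots,a_h]$ with $a_1,\dots,a_h\ge5$. Then $\mathbf Z_{p,q}=\{(1,2,\dots,2,1)\}$.
   Context: $[c_1,\dots,c_k]=c_1-\cfrac{1}{c_2-\cfrac{1}{\ddots-\cfrac1{c_k}}}$. A $k$-tuple of non-negative integers $(n_1,\dots,n_k)$ is admissible if $[n_j,\dots,n_k]>0$ for $j=2,\dots,k$ (all denominators in the continued fraction are positive). Write $\frac{p}{p-q}=[b_1,\dots,b_k]$ with all $b_i\ge2$ (uniquely). $\mathbf Z_{p,q}\subset\mathbb Z^k$ is the set of admissible $k$-tuples of non-negative integers $(n_1,\dots,n_k)$ with $[n_1,\dots,n_k]=0$ and $0\le n_i\le b_i$ for $i=1,\dots,k$. The tuple $(1,2,\dots,2,1)$ has length $k$. *)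

(* Defs.v *)
From mathcomp Require Import all_boot all_order all_algebra.
Set Implicit Arguments. Unset Strict Implicit. Unset Printing Implicit Defensive.
Import Order.TTheory GRing.Theory Num.Theory.
Local Open Scope ring_scope.

(* Hirzebruch-Jung continued fraction
   [c_1, ..., c_k] = c_1 - 1/(c_2 - 1/( ... - 1/c_k)),
   for a nonempty list of naturals, computed in rat.
   (The empty list is given the value 0; it is never used in the statement.) *)
Fixpoint hjcf (s : seq nat) : rat :=
  match s with
  | [::] => 0
  | [:: c] => c%:R
  | c :: s' => c%:R - (hjcf s')^-1
  end.

(* (n_1,...,n_k) is admissible: [n_j,...,n_k] > 0 for j = 2,...,k.
   [n_j,...,n_k] is hjcf (drop j.-1 n). *)
Definition admissible (n : seq nat) : Prop :=
  forall j : nat, (2 <= j <= size n)%N -> 0 < hjcf (drop j.-1 n).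

(* Z_{p,q} relative to the expansion p/(p-q) = [b_1,...,b_k]:
   admissible k-tuples of nonnegative integers with [n_1,...,n_k] = 0
   and 0 <= n_i <= b_i. *)
Definition Zset (b : seq nat) (n : seq nat) : Prop :=
  [/\ size n = size b, admissible n, hjcf n = 0 &
      forall i : nat, (i < size b)%N -> (nth 0%N n i <= nth 0%N b i)%N].

Definition one_twos_one (k : nat) : seq nat := 1%N :: rcons (nseq (k - 2) 2%N) 1%N.

(* Main.v *)
Require Import Defs.
From mathcomp Require Import all_boot all_order all_algebra.
From mathcomp Require Import ring lra.
Import Order.TTheory GRing.Theory Num.Theory.
Set Implicit Arguments. Unset Strict Implicit.
Local Open Scope ring_scope.

Lemma hjcf_cons (c : nat) (s : seq nat) : s != [::] -> hjcf (c :: s) = c%:R - (hjcf s)^-1.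
Proof. by case: s. Qed.

Lemma fan_val t : hjcf (rcons (nseq t 2%N) 1%N) = 1.
Proof.
elim: t => [//|t IH]. change (hjcf (2%N :: rcons (nseq t 2%N) 1%N) = 1).
rewrite hjcf_cons; last by case: t {IH}.
by rewrite IH invr1; rewrite -[2%:R]/(1+1:rat); rewrite addrK.
Qed.

Lemma hj_gt1 b : b != [::] -> all (fun x => 2 <= x)%N b -> 1 < hjcf b.
Proof.
elim: b => [//|x s IH] _ /andP[hx hs].
have hx' : (2:rat) <= x%:R by rewrite (ler_nat _ 2).
case: s IH hs => [|y s] IH hs; first by rewrite /=; lra.
rewrite (@hjcf_cons x (y :: s)) //. have h := IH isT hs.
have hu : (hjcf (y :: s))^-1 < 1 by rewrite invf_lt1 //; lra.
lra.
Qed.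

Lemma nat_between (x y : nat) (v : rat) : x%:R - 1 < v -> v < x%:R -> y%:R - 1 < v -> v < y%:R -> x = y.
Proof.
move=> h1 h2 h3 h4.
have a1 : (x%:R : rat) < (y.+1)%:R by rewrite -addn1 natrD; lra.
have a2 : (y%:R : rat) < (x.+1)%:R by rewrite -addn1 natrD; lra.
rewrite ltr_nat in a1; rewrite ltr_nat in a2. apply/eqP; rewrite eqn_leq; apply/andP; split; by [].
Qed.

Lemma hj_bounds x s : s != [::] -> all (fun x => 2 <= x)%N s ->
  x%:R - 1 < hjcf (x :: s) < x%:R.
Proof.
move=> hs ha. rewrite hjcf_cons //. have h := hj_gt1 hs ha.
have hu : (hjcf s)^-1 < 1 by rewrite invf_lt1 //; lra.
have hu0 : 0 < (hjcf s)^-1 by rewrite invr_gt0; lra.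
apply/andP; split; lra.
Qed.

Lemma hj_unique b b' : b != [::] -> b' != [::] -> all (fun x => 2 <= x)%N b ->
  all (fun x => 2 <= x)%N b' -> hjcf b = hjcf b' -> b = b'.
Proof.
elim: b b' => [//|x s IH] [//|x' s'] _ _ /andP[hx hs] /andP[hx' hs'].
case: s IH hs => [|y s] IH hs; case: s' hs' => [|y' s'] hs'.
- by move=> /= /eqP; rewrite eqr_nat => /eqP ->.
- move=> h. have := hj_bounds x' (s:=y'::s') isT hs'. rewrite -h /= => /andP[h1 h2].
  have a1 : (x'%:R : rat) < (x.+1)%:R by rewrite -addn1 natrD; lra.
  rewrite !ltr_nat in a1 h2. by rewrite ltnS leqNgt h2 in a1.
- move=> h. have := hj_bounds x (s:=y::s) isT hs. rewrite h /= => /andP[h1 h2].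
  have a1 : (x%:R : rat) < (x'.+1)%:R by rewrite -addn1 natrD; lra.
  rewrite !ltr_nat in a1 h2. by rewrite ltnS leqNgt h2 in a1.
- move=> h.
  have := hj_bounds x (s:=y::s) isT hs. have := hj_bounds x' (s:=y'::s') isT hs'. rewrite h => /andP[h1 h2] /andP[h3 h4].
  have exx := nat_between h3 h4 h1 h2. subst x'.
  move: h; rewrite (@hjcf_cons x (y::s)) // (@hjcf_cons x (y'::s')) // => h.
  have : (hjcf (y :: s))^-1 = (hjcf (y' :: s'))^-1 by lra.
  move/invr_inj => h'. by rewrite (IH (y'::s') isT isT hs hs' h').
Qed.

Definition incr (s : seq nat) : seq nat := if s is x :: s' then x.+1 :: s' else s.

Fixpoint D (a : seq nat) : seq nat :=
  match a with
  | [::] => [::]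
  | c :: a' => if a' is [::] then nseq c.-1 2%N else nseq (c - 2) 2%N ++ incr (D a')
  end.

Lemma D_cons c a' : a' != [::] -> D (c :: a') = nseq (c - 2) 2%N ++ incr (D a').
Proof. by case: a'. Qed.

Ltac neq0 := repeat (apply/andP; split); apply/eqP; lra.

Lemma hjcf_incr s : s != [::] -> hjcf (incr s) = hjcf s + 1.
Proof.
case: s => [//|x [|y s]] _ /=; first by rewrite -addn1 natrD.
by rewrite -addn1 natrD; ring.
Qed.

Lemma twos m T (y : rat) : T != [::] -> 1 < y -> hjcf T = y / (y - 1) ->
  hjcf (nseq m 2%N ++ T) = (y + m%:R) / (y + m%:R - 1).
Proof.
move=> hT hy hv. elim: m => [|m IH]; first by rewrite addr0.
change (hjcf (2%N :: (nseq m 2%N ++ T)) = (y + m.+1%:R) / (y + m.+1%:R - 1)).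
rewrite hjcf_cons; last by case: (nseq m 2%N) => //; case: T hT.
rewrite IH -addn1 natrD.
have hm : (0:rat) <= m%:R by rewrite ler0n.
have h1 : y + m%:R - 1 != 0 by apply/eqP; lra.
have h2 : y + m%:R != 0 by apply/eqP; lra.
have h3 : y + (m%:R + 1) - 1 != 0 by apply/eqP; lra.
field. by repeat (apply/andP; split); apply/eqP; lra.
Qed.

Lemma D_val a : a != [::] -> all (fun x => 2 <= x)%N a ->
  D a != [::] /\ hjcf (D a) = hjcf a / (hjcf a - 1).
Proof.
elim: a => [//|c a' IH] _ /andP[hc ha].
case: c hc => [|[|c0]] // _.
case E: a' => [|x a''].
- change (nseq c0.+1 2%N != [::] /\ hjcf (nseq c0.+1 2%N) = (c0.+2)%:R / ((c0.+2)%:R - 1)).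
  have hT : [:: 2%N] != [::] by [].
  have h := @twos c0 [:: 2%N] 2 hT.
  have e : nseq c0.+1 2%N = nseq c0 2%N ++ [:: 2%N] by elim: (c0) => //= n ->.
  have hv2 : hjcf [:: 2%N] = 2/(2-1) by rewrite /=; field.
  have h12 : (1:rat) < 2 by lra.
  rewrite e (h h12 hv2).
  split; first by case: (c0).
  rewrite -[c0.+2]/(2 + c0)%N natrD. by [].
- rewrite -E. have hne : a' != [::] by rewrite E.
  rewrite D_cons //. have [hD hv] := IH hne ha.
  have ht := hj_gt1 hne ha. set t := hjcf a' in hv ht.
  have hu : t^-1 < 1 by rewrite invf_lt1 //; lra.
  have hu0 : 0 < t^-1 by rewrite invr_gt0; lra.
  have hI : incr (D a') != [::] by case: (D a') hD.
  have hIv : hjcf (incr (D a')) = (2 - t^-1) / ((2 - t^-1) - 1).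
    rewrite hjcf_incr // hv.
    have h1 : t - 1 != 0 by apply/eqP; lra.
    have h2 : t != 0 by apply/eqP; lra.
    have h3 : 2 - t^-1 - 1 != 0 by apply/eqP; lra.
    field. by repeat (apply/andP; split); apply/eqP; lra.
  have -> : (c0.+2 - 2)%N = c0 by rewrite subn2.
  rewrite (twos c0 hI _ hIv); last by lra.
  split; first by case: (nseq c0 2%N) => //; case: (incr (D a')) hI.
  rewrite (@hjcf_cons c0.+2 a') // -/t.
  by rewrite -[c0.+2]/(2 + c0)%N natrD; congr (_ / _); ring.
Qed.

Definition R0 (r : rat) : Prop := (2 <= r /\ r <= 7/3) \/ (1 < r /\ r <= 15/11) \/ (0 < r /\ r <= 1/3).
Definition R1 (r : rat) : Prop := (3/2 <= r /\ r <= 11/7) \/ (1/2 <= r /\ r <= 4/7) \/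
   (1 < r /\ r <= 15/11) \/ (0 < r /\ r <= 1/3).
Definition R2 (r : rat) : Prop := (1 < r /\ r <= 15/11) \/ (0 < r /\ r <= 4/11).

Ltac pick := first [ split; nra | left; split; nra | right; pick ].
Ltac destr := repeat match goal with
  | H : _ \/ _ |- _ => destruct H
  | H : _ /\ _ |- _ => destruct H end.

Lemma step_gen (P Q : rat -> Prop) (x : nat) (r : rat) :
  (0 < r -> forall u : rat, u * r = 1 -> 0 < u -> P r -> 0 < x%:R - u -> Q (x%:R - u)) ->
  (P r -> 0 < r) -> P r -> 0 < x%:R - r^-1 -> Q (x%:R - r^-1).
Proof.
move=> H Hp hr hp. have r0 := Hp hr. apply: H => //.
  by rewrite mulVf //; apply/eqP; lra.
by rewrite invr_gt0.
Qed.

Lemma R0_pos r : R0 r -> 0 < r. Proof. rewrite /R0 => h; destr; lra. Qed.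
Lemma R1_pos r : R1 r -> 0 < r. Proof. rewrite /R1 => h; destr; lra. Qed.
Lemma R2_pos r : R2 r -> 0 < r. Proof. rewrite /R2 => h; destr; lra. Qed.

Lemma step01 (x : nat) r : (x <= 2)%N -> R0 r -> 0 < x%:R - r^-1 -> R1 (x%:R - r^-1).
Proof.
move=> hx; apply: (@step_gen R0 R1 x r _ (@R0_pos r)) => r0 u hu u0 hr hp.
rewrite /R0 /R1 in hr *.
case: x hx hp => [|[|[|]]] // _ hp; destr; first [exfalso; nra | pick].
Qed.

Lemma step12 (x : nat) r : (x <= 2)%N -> R1 r -> 0 < x%:R - r^-1 -> R2 (x%:R - r^-1).
Proof.
move=> hx; apply: (@step_gen R1 R2 x r _ (@R1_pos r)) => r0 u hu u0 hr hp.
rewrite /R1 /R2 in hr *.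
case: x hx hp => [|[|[|]]] // _ hp; destr; first [exfalso; nra | pick].
Qed.

Lemma step22 (x : nat) r : (x <= 2)%N -> R2 r -> 0 < x%:R - r^-1 -> R2 (x%:R - r^-1).
Proof.
move=> hx; apply: (@step_gen R2 R2 x r _ (@R2_pos r)) => r0 u hu u0 hr hp.
rewrite /R2 in hr *.
case: x hx hp => [|[|[|]]] // _ hp; destr; first [exfalso; nra | pick].
Qed.

Lemma step20 (x : nat) r : (x <= 3)%N -> R2 r -> 0 < x%:R - r^-1 -> R0 (x%:R - r^-1).
Proof.
move=> hx; apply: (@step_gen R2 R0 x r _ (@R2_pos r)) => r0 u hu u0 hr hp.
rewrite /R2 /R0 in hr *.
case: x hx hp => [|[|[|[|]]]] // _ hp; destr; first [exfalso; nra | pick].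
Qed.

Definition ph (c : seq nat) : nat :=
  match c with
  | x :: y :: _ :: _ => if x == 3%N then 0%N else if y == 3%N then 1%N else 2%N
  | x :: _ :: [::] => if x == 3%N then 0%N else 1%N
  | _ => 0%N
  end.

Lemma ph3 c : ph (3%N :: c) = 0%N.
Proof. by case: c => [|? [|? ?]]. Qed.

Lemma ph_cons y c : y != 3%N -> c != [::] -> ph (y :: c) = minn (ph c).+1 2.
Proof.
move=> hy hc. case: c hc => [|z [|w [|v s]]] // _ /=; rewrite (negbTE hy) //;
by case: (z == 3%N); case: (w == 3%N).
Qed.

Fixpoint gb (c : seq nat) : bool :=
  if c is x :: c' then [&& (x <= 3)%N, (x == 3%N) ==> (ph c' == 2%N) & gb c'] else true.

Definition RR (k : nat) (r : rat) : Prop :=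
  match k with 0%N => R0 r | 1%N => R1 r | _ => R2 r end.

Lemma inv (m c : seq nat) : size m = size c -> m != [::] -> gb c ->
  (forall i, (i < size c)%N -> (nth 0%N m i <= nth 0%N c i)%N) ->
  (forall i, (i < size m)%N -> 0 < hjcf (drop i m)) ->
  m = rcons (nseq (size m).-1 2%N) 1%N \/ RR (ph c) (hjcf m).
Proof.
elim: m c => [//|x m IH] [//|y c] hs0 _ /andP[hy /andP[h3 hg]] hle hpos.
have hs : size m = size c by case: hs0.
have hxy : (x <= y)%N := hle 0%N isT.
have hp0 : 0 < hjcf (x :: m) := hpos 0%N isT.
clear hs0.
case: m IH hs hle hpos hp0 => [|z m] IH hs hle hpos hp0.
- case: c hs hy h3 {hg hle IH} => // _ hy h3.
  move: hp0; rewrite [hjcf _]/= => hp0. clear hpos.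
  case: x hxy hp0 => [|[|[|x]]] hxy hp0.
  + by move: hp0; rewrite ltxx.
  + by left.
  + right; left; split; simpl; lra.
  + exfalso. move: hxy h3. case: y hy => [|[|[|[|]]]] //.
- have hne : (z :: m) != [::] by [].
  have hc : c != [::] by case: (c) hs.
  have IH' := IH c hs isT hg (fun i hi => hle i.+1 hi) (fun i hi => hpos i.+1 hi).
  have hp1 : 0 < hjcf (z :: m) := hpos 1%N isT.
  move: hp0; rewrite (@hjcf_cons x (z :: m)) // => hp0.
  case: (boolP (y == 3%N)) => hy3.
  + rewrite (eqP hy3) ph3. move: h3; rewrite hy3 implyTb => /eqP hph.
    rewrite hph in IH'.
    case: IH' => [hf | hr].
    * have hv : hjcf (z :: m) = 1 by rewrite hf fan_val.
      rewrite hv invr1 in hp0 *.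
      clear hpos hle. case: x hxy hp0 => [|[|[|[|x]]]] hxy hp0.
      -- exfalso; move: hp0; rewrite ?mulr0n ?mulr1n; lra.
      -- exfalso; move: hp0; rewrite ?mulr0n ?mulr1n; lra.
      -- left. by rewrite {1}hf.
      -- right; rewrite /RR /R0; left; split; lra.
      -- exfalso. move/eqP: hy3 => e; rewrite e in hxy. by [].
    * right. rewrite /RR.
      apply: step20 => //. by rewrite -(eqP hy3).
  + have hx2 : (x <= 2)%N.
      apply: (leq_trans hxy). clear -hy hy3. move: hy hy3; case: y => [|[|[|[|]]]] //.
    rewrite ph_cons //.
    case: IH' => [hf | hr].
    * have hv : hjcf (z :: m) = 1 by rewrite hf fan_val.
      rewrite hv invr1 in hp0 *.
      clear hpos hle. case: x hx2 {hxy} hp0 => [|[|[|x]]] // hx2 hp0;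
        try (exfalso; move: hp0; rewrite ?mulr0n ?mulr1n; lra).
      by left; rewrite {1}hf.
    * right. move: hr. case: (ph c) => [|[|k]] hr.
      -- change (R1 (x%:R - (hjcf (z :: m))^-1)). by apply: step01.
      -- change (R2 (x%:R - (hjcf (z :: m))^-1)). by apply: step12.
      -- change (R2 (x%:R - (hjcf (z :: m))^-1)). by apply: step22.
Qed.

Lemma gb_twos m s : gb s -> gb (nseq m 2%N ++ s).
Proof. move=> h; elim: m => [//|m IH] /=. by rewrite IH. Qed.

Lemma all_twos m : all (fun x => 2 <= x)%N (nseq m 2%N).
Proof. by elim: m. Qed.

Lemma shape a : a != [::] -> all (fun x => 5 <= x)%N a ->
  exists r, [/\ D a = [:: 2%N, 2%N, 2%N & r], r != [::], gb (D a) & all (fun x => 2 <= x)%N (D a)].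
Proof.
elim: a => [//|c a' IH] _ /andP[hc ha].
case: c hc => [|[|[|[|[|c0]]]]] // _.
case E: a' => [|x a''].
- exists (nseq c0.+1 2%N). split => //.
  + change (gb (nseq c0.+4 2%N)). by rewrite -[nseq _ _]cats0 gb_twos.
  + exact: all_twos.
- rewrite -E. have hne : a' != [::] by rewrite E.
  have [r' [e' hr' hg' ha']] := IH hne ha.
  rewrite D_cons // e' /=.
  exists (nseq c0 2%N ++ [:: 3%N, 2%N, 2%N & r']). split => //.
  + by case: (c0).
  + apply: gb_twos. rewrite /=. apply/andP; split.
      by case: r' hr' {e' hg' ha'}.
    by move: hg'; rewrite e' /=.
  + rewrite all_cat all_twos /=. by move: ha'; rewrite e' /=.
Qed.

Lemma drop_fan i t : (i <= t)%N -> drop i (rcons (nseq t 2%N) 1%N) = rcons (nseq (t - i) 2%N) 1%N.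
Proof.
elim: i t => [|i IH] t h; first by rewrite drop0 subn0.
case: t h => [|t] h //. rewrite subSS -IH //.
Qed.

Lemma fan_Z (b : seq nat) : (2 <= size b)%N -> all (fun x => 2 <= x)%N b ->
  Zset b (one_twos_one (size b)).
Proof.
move=> hk hall. rewrite /Zset /one_twos_one.
set t := (size b - 2)%N.
have ht : size b = t.+2 by rewrite /t -addn2 subnK.
split.
- by rewrite /= size_rcons size_nseq ht.
- move=> j /andP[hj2 hjk].
  case: j hj2 hjk => [|[|j]] // _ hjk.
  rewrite [drop _ _]/= drop_fan; first by rewrite fan_val.
  move: hjk. rewrite /= size_rcons size_nseq. by rewrite !ltnS.
- rewrite hjcf_cons; last by case: (t).
  by rewrite fan_val invr1 subrr.
- move=> i hi.
  have h2 : (2 <= nth 0%N b i)%N by apply: (allP hall); apply: mem_nth.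
  apply: leq_trans h2.
  have hall2 : all (fun x => x <= 2)%N (1%N :: rcons (nseq t 2%N) 1%N).
    by rewrite /= all_rcons /=; elim: (t).
  case: (ltnP i (size (1%N :: rcons (nseq t 2%N) 1%N))) => hi'.
    exact: (allP hall2) _ (mem_nth 0%N hi').
  by rewrite nth_default.
Qed.

Unset Implicit Arguments.

Theorem lemma2p3 (p q : nat) (a b : seq nat) :
  (1 <= q)%N -> (q < p)%N -> coprime p q ->
  a != [::] -> all (fun x => 5 <= x)%N a ->
  (p%:R / q%:R : rat) = hjcf a ->
  b != [::] -> all (fun x => 2 <= x)%N b ->
  (p%:R / (p - q)%:R : rat) = hjcf b ->
  forall n : seq nat, Zset b n <-> n = one_twos_one (size b).
Proof.
move=> hq hpq _ ha0 ha hpa hb0 hb hpb n.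
have ha2 : all (fun x => 2 <= x)%N a.
  by apply: sub_all ha => x hx; apply: leq_trans hx.
have [hD0 hDv] := D_val ha0 ha2.
have [r [eD hr hg hall]] := shape ha0 ha.
have hbD : b = D a.
  apply: hj_unique hb0 hD0 hb hall _.
  rewrite hDv -hpa -hpb natrB; last exact: ltnW.
  have hq0 : (0 : rat) < q%:R by rewrite ltr0n.
  have hpq' : (q%:R : rat) < p%:R by rewrite ltr_nat.
  field. by repeat (apply/andP; split); apply/eqP; lra.
rewrite hbD eD.
set c := [:: 2%N, 2%N & r].
have hphc : ph c = 2%N by rewrite /c; case: (r) hr.
have hgc : gb c by move: hg; rewrite eD /= .
split.
- case=> hsz hadm hz hle.
  case: n hsz hadm hz hle => [//|n1 m] hsz0 hadm hz hle.
  have hsz : size m = size c by case: hsz0.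
  have hm0 : m != [::] by case: (m) hsz.
  have hpos : forall i, (i < size m)%N -> 0 < hjcf (drop i m).
    move=> i hi. have := hadm i.+2. by apply; rewrite /= ?ltnS.
  have := @inv m c hsz hm0 hgc (fun i hi => hle i.+1 hi) hpos.
  have hn1 : (n1 <= 2)%N := hle 0%N isT.
  have hp1 : 0 < hjcf m by have := hpos 0%N; rewrite drop0; apply; case: (m) hm0.
  move: hz. rewrite hjcf_cons // => hz.
  set t := hjcf m in hp1 hz *.
  have hu : t^-1 * t = 1 by rewrite mulVf //; apply/eqP; lra.
  have ht : t^-1 = n1%:R by lra.
  case=> [hf | hR].
  + have ht1 : t = 1 by rewrite /t hf fan_val.
    rewrite ht1 invr1 in ht.
    have e1 : n1 = 1%N by apply/eqP; rewrite -(eqr_nat rat) -ht.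
    rewrite e1 {1}hf /one_twos_one /=. by rewrite hsz.
  + exfalso. rewrite hphc /RR /R2 in hR. rewrite ht in hu.
    clear hsz0 hadm hz. case: n1 hn1 {ht hle} hu => [|[|[|]]] // _ hu; move: hu; rewrite ?mulr0n ?mulr1n => hu;
      destr; nra.
- move=> ->. rewrite -eD. apply: fan_Z => //. by rewrite eD.
Qed.
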